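(* Let $n\ge1$, $t_1<\dots<t_n$, $p_0,\dots,p_n>0$, $p=\sum_{j=0}^n p_j\chi_{I_j}$ with $I_0=(-\infty,t_1]$, $I_j=(t_j,t_{j+1}]$ ($1\le j\le n-1$), $I_n=(t_n,\infty)$, and $q_k=p_k^{-1/2}$. Let $\Phi^\pm$ be the functions defined in the context. Then $\Phi^+$ and $\Phi^-$ are uniformly bounded on $(0,\infty)\times\mathbb{R}$, i.e. $\sup_{\lambda>0,\,x\in\mathbb{R}}\big(|\Phi^+(\lambda,x)|+|\Phi^-(\lambda,x)|\big)<\infty$.
   Context: For $z\in\mathbb{C}\setminus(-\infty,0]$, $\sqrt z$ is the principal square root. For $1\le k\le n$ let $$L_k(z)=\frac12\begin{bmatrix}\left(1+\frac{q_k}{q_{k-1}}\right)e^{it_k(q_{k-1}-q_k)\sqrt z} & \left(1-\frac{q_k}{q_{k-1}}\right)e^{-it_k(q_{k-1}+q_k)\sqrt z}\\ \left(1-\frac{q_k}{q_{k-1}}\right)e^{it_k(q_{k-1}+q_k)\sqrt z} & \left(1+\frac{q_k}{q_{k-1}}\right)e^{-it_k(q_{k-1}-q_k)\sqrt z}\end{bmatrix},\qquad R_k(z)=L_k(z)^{-1}.$$ Define $a_n^+=1$, $b_n^+=0$, $(a_l^+,b_l^+)^T=R_{l+1}(z)(a_{l+1}^+,b_{l+1}^+)^T$ for $l=n-1,\dots,0$; and $a_0^-=0$, $b_0^-=1$, $(a_j^-,b_j^-)^T=L_j(z)(a_{j-1}^-,b_{j-1}^-)^T$ for $j=1,\dots,n$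 (the connection coefficients). Set $\Phi^\pm(z,x)=a_k^\pm(z)e^{iq_k\sqrt z x}+b_k^\pm(z)e^{-iq_k\sqrt z x}$ for $x\in I_k$, $0\le k\le n$. These are solutions of $-(pf')'=zf$ with $f,pf'$ locally absolutely continuous. *)

(* Defs.v *)
From HB Require Import structures.
From mathcomp Require Import all_boot all_order all_algebra.
From mathcomp Require Import complex.
From mathcomp Require Import all_classical all_reals all_analysis.
Set Implicit Arguments. Unset Strict Implicit. Unset Printing Implicit Defensive.
Import Order.TTheory GRing.Theory Num.Theory.
Local Open Scope ring_scope.
Local Open Scope complex_scope.

Section Defs.
Variable R : realType.
Local Notation C := R[i].

Definition cabs (z : C) : R :=
  Num.sqrt (complex.Re z ^+ 2 + complex.Im z ^+ 2).

Definition cexp (z : C) : C :=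
  (expR (complex.Re z))%:C * (cos (complex.Im z) +i* sin (complex.Im z))%C.

(* principal square root on C \ (-oo,0]:
   sqrt(a+ib) = sqrt((|z|+a)/2) + i sgn(b) sqrt((|z|-a)/2)   (sgn b = 1 if b >= 0).
   (Its value on (-oo,0] is irrelevant here.) *)
Definition csqrt (z : C) : C :=
  (Num.sqrt ((cabs z + complex.Re z) / 2)
   +i* ((if 0 <= complex.Im z then 1 else -1) *
        Num.sqrt ((cabs z - complex.Re z) / 2)))%C.

Definition qk (p : nat -> R) (k : nat) : R := (Num.sqrt (p k))^-1.

Definition Lmx (t p : nat -> R) (k : nat) (z : C) : 'M[C]_2 :=
  let q := qk p in
  let r := (q k / q k.-1)%:C in
  let s := csqrt z in
  let e (c : R) := cexp ('i * (t k * c)%:C * s) in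
  (2^-1) *: \matrix_(i < 2, j < 2)
     match val i, val j with
     | 0, 0 => (1 + r) * e (q k.-1 - q k)
     | 0, _ => (1 - r) * e (- (q k.-1 + q k))
     | _, 0 => (1 - r) * e (q k.-1 + q k)
     | _, _ => (1 + r) * e (- (q k.-1 - q k))
     end.

Definition Rmx (t p : nat -> R) (k : nat) (z : C) : 'M[C]_2 := invmx (Lmx t p k z).

Definition col2 (a b : C) : 'cV[C]_2 :=
  \col_(i < 2) if val i == 0 then a else b.

(* (a_l^+, b_l^+) = R_{l+1} ... R_n (1,0);  coef_plus_aux m = (a_{n-m}^+, b_{n-m}^+) *)
Fixpoint coef_plus_aux (t p : nat -> R) (n : nat) (z : C) (m : nat) : 'cV[C]_2 :=
  match m with
  | 0 => col2 1 0
  | m'.+1 => Rmx t p (n - m') z *m coef_plus_aux t p n z m'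
  end.

Definition coef_plus (t p : nat -> R) (n : nat) (z : C) (l : nat) : 'cV[C]_2 :=
  coef_plus_aux t p n z (n - l).

Fixpoint coef_minus (t p : nat -> R) (z : C) (j : nat) : 'cV[C]_2 :=
  match j with
  | 0 => col2 0 1
  | j'.+1 => Lmx t p j z *m coef_minus t p z j'
  end.

(* index k of the interval I_k containing x, for t_1 < ... < t_n:
   I_0 = (-oo,t_1], I_j = (t_j,t_{j+1}], I_n = (t_n,oo);
   k = #{ j in 1..n | t_j < x } *)
Definition interval_index (t : nat -> R) (n : nat) (x : R) : nat :=
  count (fun j => t j < x) (iota 1 n).

Definition Phi_of (t p : nat -> R) (n : nat) (z : C) (x : R) (ab : nat -> 'cV[C]_2) : C :=
  let k := interval_index t n x in
  let s := csqrt z in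
  (ab k) ord0 ord0 * cexp ('i * (qk p k * x)%:C * s)
  + (ab k) ord_max ord0 * cexp (- ('i * (qk p k * x)%:C * s)).

Definition Phi_plus (t p : nat -> R) (n : nat) (z : C) (x : R) : C :=
  Phi_of t p n z x (coef_plus t p n z).

Definition Phi_minus (t p : nat -> R) (n : nat) (z : C) (x : R) : C :=
  Phi_of t p n z x (coef_minus t p z).

End Defs.

(* Main.v *)
Set Warnings "-all".
Require Import Defs.
From HB Require Import structures.
From mathcomp Require Import all_boot all_order all_algebra.
From mathcomp Require Import complex.
From mathcomp Require Import all_classical all_reals all_analysis.
From mathcomp Require Import ring lra.
Import Order.TTheory GRing.Theory Num.Theory.
Local Open Scope ring_scope.
Local Open Scope complex_scope.

Section S.
Variable R : realType.
Local Notation C := R[i].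

Lemma cabsE (z : C) : `|z| = (cabs z)%:C.
Proof. by rewrite normc_def. Qed.

Lemma csqrt_pos (l : R) : 0 < l -> csqrt l%:C = (Num.sqrt l)%:C.
Proof.
move=> l0; have ca : cabs l%:C = l.
  by rewrite /cabs /= expr0n /= addr0 sqrtr_sqr ger0_norm // ltW.
rewrite /csqrt ca /= lexx subrr mul0r sqrtr0 mulr0.
congr (_ +i* _); congr Num.sqrt; lra.
Qed.

Lemma cexp_i (c s : R) : cexp ('i * c%:C * s%:C) = cos (c * s) +i* sin (c * s).
Proof.
by rewrite /cexp /= !(mul0r,mul1r,mulr0,subr0,addr0,add0r,sub0r,subrr,oppr0) expR0 rmorph1 mul1r.
Qed.


Lemma normE (a : R) : `|cos a +i* sin a| = 1.
Proof. by rewrite normc_def /= cos2Dsin2 sqrtr1. Qed.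

Lemma EN (a : R) : (cos a +i* sin a) * (cos (- a) +i* sin (- a)) = 1.
Proof.
rewrite cosN sinN; apply/eqP; rewrite eq_complex /=; apply/andP; split; apply/eqP;
  have := cos2Dsin2 a; rewrite !expr2 => h; nra.
Qed.

Definition bnd m n (A : 'M[C]_(m,n)) (b : C) := forall i j, `|A i j| <= b.
Arguments bnd {m n}.

Lemma mulmx_bnd m n p (A : 'M[C]_(m,n)) (B : 'M[C]_(n,p)) a b :
  bnd A a -> bnd B b -> bnd (A *m B) (n%:R * (a * b)).
Proof.
move=> hA hB i j; rewrite mxE; apply: le_trans (ler_norm_sum _ _ _) _.
have -> : n%:R * (a*b) = \sum_(k < n) (a * b) by rewrite sumr_const card_ord mulr_natl.
apply: ler_sum => k _; rewrite normrM; apply: ler_pM => //; exact: normr_ge0.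
Qed.

Lemma det2 (A : 'M[C]_2) : \det A = A 0 0 * A 1 1 - A 0 1 * A 1 0.
Proof.
rewrite (expand_det_row _ 0) !big_ord_recl big_ord0 addr0 /cofactor !det_mx11 !mxE /=.
have -> : lift 0 0 = 1 :> 'I_2 by apply: val_inj.
have -> : lift (1 : 'I_2) 0 = 0 :> 'I_2 by apply: val_inj.
by rewrite /= expr0 expr1 !mul1r mulN1r mulrN.
Qed.

Lemma adj2_bnd (A : 'M[C]_2) b : bnd A b -> bnd (\adj A) b.
Proof.
move=> h i j; rewrite mxE /cofactor det_mx11 !mxE normrM normrX normrN1 expr1n mul1r.
exact: h.
Qed.

Lemma inv_bnd (A : 'M[C]_2) b d : bnd A b -> \det A = d -> bnd (invmx A) (b + `|d|^-1 * b).
Proof.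
move=> h hd i j; have b0 : 0 <= b := le_trans (normr_ge0 _) (h 0 0).
rewrite /invmx; case: ifP => _.
- rewrite mxE normrM hd normfV; apply: le_trans (_ : _ <= `|d|^-1 * b) _.
    by apply: ler_wpM2l; [rewrite invr_ge0 normr_ge0 | exact: adj2_bnd].
  by rewrite lerDr.
- apply: le_trans (h i j) _; rewrite lerDl; by apply: mulr_ge0 => //; rewrite invr_ge0 normr_ge0.
Qed.

Arguments cexp : simpl never.
Lemma half_le1 : `|2^-1 : C| <= 1.
Proof. by rewrite normfV normr_nat invf_le1 ?ltr0n // ler1n. Qed.

Lemma L_bnd t p k z s : csqrt z = s%:C ->
  bnd (Lmx t p k z) (`|1 + (qk p k / qk p k.-1)%:C| + `|1 - (qk p k / qk p k.-1)%:C|).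
Proof.
move=> hs i j; rewrite /Lmx hs mxE [X in `|_ * X|]mxE.
case: i => [[|i'] hi]; case: j => [[|j'] hj] /=; rewrite !cexp_i !normrM normE mulr1.
- apply: le_trans (_ : _ <= `|1 + (qk p k / qk p k.-1)%:C|) _.
    by apply: ler_piMl; [exact: normr_ge0 | exact: half_le1].
  by rewrite lerDl normr_ge0.
- apply: le_trans (_ : _ <= `|1 - (qk p k / qk p k.-1)%:C|) _.
    by apply: ler_piMl; [exact: normr_ge0 | exact: half_le1].
  by rewrite lerDr normr_ge0.
- apply: le_trans (_ : _ <= `|1 - (qk p k / qk p k.-1)%:C|) _.
    by apply: ler_piMl; [exact: normr_ge0 | exact: half_le1].
  by rewrite lerDr normr_ge0.
- apply: le_trans (_ : _ <= `|1 + (qk p k / qk p k.-1)%:C|) _.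
    by apply: ler_piMl; [exact: normr_ge0 | exact: half_le1].
  by rewrite lerDl normr_ge0.
Qed.

Lemma det_alg (r u v w y : C) : u * v = 1 -> w * y = 1 ->
  2^-1*((1+r)*u) * (2^-1*((1+r)*v)) - 2^-1*((1-r)*y) * (2^-1*((1-r)*w)) = r.
Proof.
move=> h1 h2.
have -> : 2^-1*((1+r)*u) * (2^-1*((1+r)*v)) - 2^-1*((1-r)*y) * (2^-1*((1-r)*w))
   = 2^-1*2^-1*((1+r)^+2*(u*v) - (1-r)^+2*(w*y)) by ring.
rewrite h1 h2 !mulr1.
have h2' : (2:C) != 0 by rewrite pnatr_eq0.
by field.
Qed.

Lemma L_det (t p : nat -> R) k (z : C) (s : R) : csqrt z = s%:C -> \det (Lmx t p k z) = (qk p k / qk p k.-1)%:C.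
Proof.
move=> hs; rewrite det2 /Lmx hs !mxE /= !cexp_i !mulrN !mulNr.
by apply: det_alg; apply: EN.
Qed.


Lemma col2_bnd : bnd (col2 (0 : C) 1) 1.
Proof.
move=> i j; rewrite mxE; case: ifP => _; by rewrite ?normr0 ?normr1 ?ler01.
Qed.

Lemma col2_bnd' : bnd (col2 (1 : C) 0) 1.
Proof.
move=> i j; rewrite mxE; case: ifP => _; by rewrite ?normr0 ?normr1 ?ler01.
Qed.

Lemma minus_bnd (t p : nat -> R) j :
  exists b, forall l : R, 0 < l -> bnd (coef_minus t p l%:C j) b.
Proof.
elim: j => [|j [b IH]]; first by exists 1 => l _; exact: col2_bnd.
exists (2%:R * ((`|1 + (qk p j.+1 / qk p j.+1.-1)%:C| + `|1 - (qk p j.+1 / qk p j.+1.-1)%:C|) * b)).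
move=> l l0 /=; apply: mulmx_bnd (IH l l0).
exact: (L_bnd t p _ _ _ (csqrt_pos _ l0)).
Qed.

Lemma plus_bnd (t p : nat -> R) n m :
  exists b, forall l : R, 0 < l -> bnd (coef_plus_aux t p n l%:C m) b.
Proof.
elim: m => [|m [b IH]]; first by exists 1 => l _; exact: col2_bnd'.
pose r : C := (qk p (n - m) / qk p (n - m).-1)%:C.
exists (2%:R * (((`|1 + r| + `|1 - r|) + `|r|^-1 * (`|1 + r| + `|1 - r|)) * b)).
move=> l l0 /=; apply: mulmx_bnd (IH l l0).
apply: inv_bnd; first exact: (L_bnd t p _ _ _ (csqrt_pos _ l0)).
exact: (L_det t p _ _ _ (csqrt_pos _ l0)).
Qed.

Lemma unif (P : nat -> C -> Prop) :
  (forall k, exists b, 0 <= b /\ P k b) ->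
  (forall k b b', P k b -> b <= b' -> P k b') ->
  forall N, exists b, 0 <= b /\ forall k, (k <= N)%N -> P k b.
Proof.
move=> h hm; elim=> [|N [b [b0 IH]]].
  have [b [b0 hb]] := h 0%N; exists b; split => // k; rewrite leqn0 => /eqP ->; exact: hb.
have [b' [b'0 hb']] := h N.+1; exists (b + b'); split; first exact: addr_ge0.
move=> k; rewrite leq_eqVlt => /orP [/eqP -> | hk].
  by apply: hm hb' _; rewrite lerDr.
by apply: hm (IH k hk) _; rewrite lerDl.
Qed.

Lemma Phi_bnd (t p : nat -> R) n (l x : R) ab b : 0 < l ->
  bnd (ab (interval_index t n x)) b -> `|Phi_of t p n l%:C x ab| <= b + b.
Proof.
move=> l0 h; rewrite /Phi_of csqrt_pos //.
have hN : forall c s : R, -('i * c%:C * s%:C) = 'i * (-c)%:C * s%:C :> C.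
  by move=> c s'; rewrite rmorphN /= mulrN mulNr.
rewrite hN !cexp_i; apply: le_trans (ler_normD _ _) _.
by apply: lerD; rewrite normrM normE mulr1; apply: h.
Qed.

Lemma main_lemma (n : nat) (t p : nat -> R) :
  (1 <= n)%N ->
  (forall j : nat, (1 <= j)%N -> (j < n)%N -> t j < t j.+1) ->
  (forall j : nat, (j <= n)%N -> 0 < p j) ->
  exists M : R, forall (lambda x : R), 0 < lambda ->
    cabs (Phi_plus t p n (lambda%:C)%C x) + cabs (Phi_minus t p n (lambda%:C)%C x) <= M.
Proof.
move=> _ _ _.
pose Pp := fun k (b : R[i]) => forall l : R, 0 < l -> bnd (coef_plus t p n l%:C k) b.
pose Pm := fun k (b : R[i]) => forall l : R, 0 < l -> bnd (coef_minus t p l%:C k) b.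
have mono : forall (F : nat -> R -> 'cV[R[i]]_2) k b b',
    (forall l : R, 0 < l -> bnd (F k l) b) -> b <= b' ->
    (forall l : R, 0 < l -> bnd (F k l) b').
  by move=> F k b b' hb hbb' l l0 i j; apply: le_trans (hb l l0 i j) hbb'.
have ge0 : forall (F : nat -> R -> 'cV[R[i]]_2) k b,
    (forall l : R, 0 < l -> bnd (F k l) b) -> 0 <= b.
  by move=> F k b hb; apply: le_trans (normr_ge0 _) (hb 1 ltr01 0 0).
have [bp [_ hp]] := unif (fun k b => forall l : R, 0 < l -> bnd (coef_plus t p n l%:C k) b)
   (fun k => let: ex_intro b hb := plus_bnd t p n (n - k) in
             ex_intro _ b (conj (ge0 (fun k l => coef_plus t p n l%:C k) k b hb) hb))
   (mono (fun k l => coef_plus t p n l%:C k)) n.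
have [bm [_ hm]] := unif (fun k b => forall l : R, 0 < l -> bnd (coef_minus t p l%:C k) b)
   (fun k => let: ex_intro b hb := minus_bnd t p k in
             ex_intro _ b (conj (ge0 (fun k l => coef_minus t p l%:C k) k b hb) hb))
   (mono (fun k l => coef_minus t p l%:C k)) n.
exists (complex.Re (bp + bp + (bm + bm))) => l x l0.
have hk : (interval_index t n x <= n)%N.
  by rewrite /interval_index; apply: leq_trans (count_size _ _) _; rewrite size_iota.
have h1 := Phi_bnd t p n l x _ _ l0 (hp _ hk l l0).
have h2 := Phi_bnd t p n l x _ _ l0 (hm _ hk l l0).
have := lerD h1 h2; rewrite /Phi_plus /Phi_minus !cabsE -rmorphD lecE => /andP [_].
by [].
Qed.

End S.

Theorem lemma3p3 (R : realType) (n : nat) (t p : nat -> R) :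
  (1 <= n)%N ->
  (forall j : nat, (1 <= j)%N -> (j < n)%N -> t j < t j.+1) ->
  (forall j : nat, (j <= n)%N -> 0 < p j) ->
  exists M : R, forall (lambda x : R), 0 < lambda ->
    cabs (Phi_plus t p n (lambda%:C)%C x) + cabs (Phi_minus t p n (lambda%:C)%C x) <= M.
Proof. exact: main_lemma. Qed.
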